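(* Let $H$ be a digraph (possibly with loops) and let $D$ be an $H$-colored transitive digraph. If $k \geq 2$, then $D$ has a $(k,H)$-kernel.
   Context: All digraphs are finite. A digraph $D$ is transitive if for all distinct $u,v\in V(D)$, whenever there is a directed $uv$-path of length $2$, the arc $(u,v)$ belongs to $A(D)$. $D$ has no loops and comes with a map $\rho: A(D)\to V(H)$. For a walk $W=(x_0,\ldots,x_n)$ in $D$, there is an obstruction on $x_i$ if $(\rho(x_{i-1},x_i),\rho(x_i,x_{i+1})) \notin A(H)$; for an open walk this is considered at internal vertices $x_i$, $1\le i\le n-1$, for a closed walk at all $i\in\{0,\ldots,n-1\}$ with indices modulo $n$. $O_H(W)$ is the set of indices with an obstruction; the $H$-length is $l_H(W)=|O_H(W)|+1$ for open $W$ and $|O_H(W)|$ for closed $W$. A $(k,H)$-kernel ($k\ge2$) is a set $S\subseteq V(D)$ such that for every two distinct $u,v\in S$ every directed $uv$-path in $D$ has $H$-length at least $k$, and for every $x\in V(D)\setminus S$ there is a directed path from $x$ to a vertex of $S$ of $H$-length at most $k-1$. *)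

(* Defs.v *)
From mathcomp Require Import all_boot.
Set Implicit Arguments. Unset Strict Implicit. Unset Printing Implicit Defensive.

Section HDefs.
Variables (V VH : finType).
(* D = (V, A) with colouring rho : arcs -> V(H); H = (VH, AH). rho is given as a
   total function V -> V -> VH of which only the values on arcs matter. *)
Variables (A : rel V) (AH : rel VH) (rho : V -> V -> VH).

Definition loopless : Prop := forall x : V, ~~ A x x.

Definition transitive_digraph : Prop :=
  forall u v w : V, u != v -> A u w -> A w v -> A u v.

Fixpoint obstructions (a b : V) (s : seq V) : nat :=
  match s with
  | [::] => 0
  | c :: s' => (~~ AH (rho a b) (rho b c)) + obstructions b c s'
  end.

(* H-length of the open walk x :: p (p non-empty): |O_H| + 1 *)
Definition hlength (x : V) (p : seq V) : nat :=
  match p with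
  | [::] => 1
  | b :: s => obstructions x b s + 1
  end.

Definition dpath (x : V) (p : seq V) (y : V) : bool :=
  [&& path A x p, uniq (x :: p) & last x p == y].

Definition is_kH_kernel (k : nat) (S : {set V}) : Prop :=
  (forall u v, u \in S -> v \in S -> u != v ->
     forall p, dpath u p v -> k <= hlength u p) /\
  (forall x, x \notin S ->
     exists y p, [/\ y \in S, dpath x p y & hlength x p <= k - 1]).

Definition has_kH_kernel (k : nat) : Prop := exists S : {set V}, is_kH_kernel k S.
End HDefs.

(* Main.v *)
Require Import Defs.
From mathcomp Require Import all_boot.
Set Implicit Arguments. Unset Strict Implicit. Unset Printing Implicit Defensive.

Lemma trans_path_arc (V : finType) (A : rel V) :
  transitive_digraph A -> forall p x, path A x p -> x != last x p -> A x (last x p).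
Proof.
move=> tr; elim=> [|w p IH] x //=; first by rewrite eqxx.
case/andP=> Axw pw nxl.
have [e|nwl] := eqVneq w (last w p); first by rewrite -e.
exact: tr nxl Axw (IH _ pw nwl).
Qed.

Theorem corollary13 (VH : finType) (AH : rel VH) (V : finType) (A : rel V)
  (rho : V -> V -> VH) (k : nat) :
  loopless A -> transitive_digraph A -> 2 <= k ->
  has_kH_kernel A AH rho k.
Proof.
move=> _ tr k2.
pose term x := [forall y, connect A x y ==> connect A y x].
pose S := [set x | term x && [forall y, connect A x y ==> (enum_rank x <= enum_rank y)%N]].
exists S; split.
  move=> u v; rewrite !inE => /andP[/forallP tu /forallP mu] /andP[_ /forallP mv] nuv p.
  case/and3P=> pp _ /eqP lp.
  have cuv : connect A u v by apply/connectP; exists p.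
  have cvu := implyP (tu v) cuv.
  have e : enum_rank u = enum_rank v.
    by apply: val_inj; apply/eqP; rewrite eqn_leq (implyP (mu v) cuv) (implyP (mv u) cvu).
  by move/enum_rank_inj: e nuv => ->; rewrite eqxx.
move=> x xS.
pose y := [arg min_(z < x | connect A x z) #|[set w | connect A z w]|].
have [cxy miny] : connect A x y /\ forall z, connect A x z ->
    (#|[set w | connect A y w]| <= #|[set w | connect A z w]|)%N.
  by rewrite /y; case: arg_minnP => // z cz m.
have ty : term y.
  apply/forallP=> z; apply/implyP=> cyz.
  have sub : [set w | connect A z w] \subset [set w | connect A y w].
    by apply/subsetP=> w; rewrite !inE; apply: connect_trans.
  have eqs : [set w | connect A z w] = [set w | connect A y w].
    by apply/eqP; rewrite eqEcard sub miny // (connect_trans cxy cyz).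
  have : y \in [set w | connect A z w] by rewrite eqs inE connect0.
  by rewrite inE.
pose y' := [arg min_(z < y | connect A y z) enum_rank z].
have [cyy' miny'] : connect A y y' /\ forall z, connect A y z ->
    (enum_rank y' <= enum_rank z)%N.
  by rewrite /y'; case: arg_minnP => // z cz m.
have cy'y : connect A y' y := implyP (forallP ty y') cyy'.
have y'S : y' \in S.
  rewrite inE; apply/andP; split.
    apply/forallP=> z; apply/implyP=> cz.
    have cyz := connect_trans cyy' cz.
    exact: connect_trans (implyP (forallP ty z) cyz) cyy'.
  apply/forallP=> z; apply/implyP=> cz.
  exact: miny' (connect_trans cyy' cz).
have cxy' := connect_trans cxy cyy'.
have nxy : x != y' by apply: contraNneq xS => ->.
case/connectP: cxy' => p pp lp.
have Axy : A x y' by rewrite lp; apply: trans_path_arc => //; rewrite -lp.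
exists y', [:: y']; split => //.
  by rewrite /dpath /= Axy inE nxy eqxx.
by rewrite /hlength /=; case: k k2 => [|[|]].
Qed.
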